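(* Let $G=(V,E)$ be an undirected graph without self-loops, let $u\ne v$ be vertices with $u$ dominating $v$, and let $\vec z=(z_1,\dots,z_N)$ be a list of all vertices of $V$ in which $v$ occurs before $u$. Let $O_{\mathrm{lex}}(\vec a,\vec b)$ be the constraint $\sum_{i=1}^N 2^{N-i}(b_i-a_i)\ge0$, let $\omega$ swap $u$ and $v$, and let $C$ be $u+\bar v\ge1$. Then for every set $\mathcal D$ of PB constraints and every $k\in\mathbb Z\cup\{\infty\}$: $$F_G\cup\mathcal D\cup\{f\le k-1\}\cup\{\neg C\}\vdash F_G|_\omega\cup O_{\mathrm{lex}}(\vec z|_\omega,\vec z)\cup\{f|_\omega\le f\},$$ $$F_G\cup\mathcal D\cup\{f\le k-1\}\cup\{\neg C\}\cup O_{\mathrm{lex}}(\vec z,\vec z|_\omega)\vdash 0\ge1,$$ i.e. the dominance-based strengthening conditions hold for deriving $u+\bar v\ge1$ with witness $\omega$ from any configuration with core set $F_G$, derived set $\mathcal D$, preorder $(O_{\mathrm{lex}},\vec z)$ and bound $k$.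
   Context: Each vertex $w\in V$ is identified with a Boolean variable. $F_G$ is the PB formula consisting of $\bar a+\bar b\ge1$ for all distinct non-adjacent $a,b\in V$; the objective is $f=\sum_{w\in V}\bar w$. $N(w)=\{w':(w,w')\in E\}$; for distinct $a,b$, $a$ dominates $b$ if $N(a)\setminus\{b\}\supseteq N(b)\setminus\{a\}$. A literal is a variable or its negation $\bar x=1-x$; a PB constraint is $\sum_i a_i\ell_i\ge A$ with negation $\sum_i-a_i\ell_i\ge -A+1$. For a substitution $\omega$, $C|_\omega$ replaces each literal by its image, and $G|_\omega$, $f|_\omega$ likewise. $O(\vec z|_\alpha,\vec z|_\beta)$ is $O(\vec a,\vec b)$ with $a_i$ replaced by $\alpha(z_i)$ and $b_i$ by $\beta(z_i)$ (by $z_i$ itself when no substitution is indicated). $\vdash$ denotes cutting planes derivability (axioms, literal axioms $\ell\ge0$, positive integer linear combinations, division with rounding up), extended so that $H\vdash D$ whenever $0\ge1$ is derivable from $H\cup\{\neg D\}$. $f\le\infty-1$ is the trivially true constraint. *)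

(* Defs.v *)
From mathcomp Require Import all_boot all_order all_algebra.
Set Implicit Arguments. Unset Strict Implicit. Unset Printing Implicit Defensive.
Import Order.TTheory GRing.Theory Num.Theory.
Local Open Scope ring_scope.

Section PB.
Variable V : finType.

(* literal (x, true) = x, (x, false) = \bar x *)
Definition lit := (V * bool)%type.

(* syntactic PB constraint  sum_i a_i l_i >= A *)
Record pbc := PBC { terms : seq (int * lit) ; deg : int }.

Definition pb_neg (C : pbc) : pbc :=
  PBC [seq (- t.1, t.2) | t <- terms C] (- deg C + 1).

Definition pb_false : pbc := PBC [::] 1.

(* normal form: coefficient on each variable and degree, using \bar x = 1 - x *)
Definition nf := ({ffun V -> int} * int)%type.

Definition term_coef (x : V) (t : int * lit) : int :=
  if t.2.1 == x then (if t.2.2 then t.1 else - t.1) else 0.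

Definition norm (C : pbc) : nf :=
  ([ffun x => \sum_(t <- terms C) term_coef x t],
   deg C - \sum_(t <- terms C | ~~ t.2.2) t.1).

Definition nf_add (n1 n2 : nf) : nf :=
  ([ffun x => n1.1 x + n2.1 x], n1.2 + n2.2).

Definition nf_mul (c : int) (n : nf) : nf :=
  ([ffun x => c * n.1 x], c * n.2).

(* ceiling of m / d for d > 0 *)
Definition ceilz (m d : int) : int := - ((- m) %/ d)%Z.

(* division with rounding up, performed on the literal normal form
   (all coefficients nonnegative: a negative coefficient -a on x is read as
   a \bar x - a). *)
Definition nf_div (d : int) (n : nf) : nf :=
  ([ffun x => if 0 <= n.1 x then ceilz (n.1 x) d else - ceilz (- n.1 x) d],
   ceilz (n.2 + \sum_(x | n.1 x < 0) (- n.1 x)) d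
     - \sum_(x | n.1 x < 0) ceilz (- n.1 x) d).

Inductive cp (H : nf -> Prop) : nf -> Prop :=
| cp_ax n : H n -> cp H n
| cp_lit (l : lit) : cp H (norm (PBC [:: (1, l)] 0))
| cp_add n1 n2 : cp H n1 -> cp H n2 -> cp H (nf_add n1 n2)
| cp_mul c n : 0 < c -> cp H n -> cp H (nf_mul c n)
| cp_div d n : 0 < d -> cp H n -> cp H (nf_div d n).

Definition cpd (H : pbc -> Prop) (C : pbc) : Prop :=
  cp (fun n => exists2 D, H D & norm D = n) (norm C).

Definition setU1pb (H : pbc -> Prop) (C : pbc) : pbc -> Prop :=
  fun D => H D \/ D = C.

Definition setUpb (H1 H2 : pbc -> Prop) : pbc -> Prop :=
  fun D => H1 D \/ H2 D.

Definition derives (H : pbc -> Prop) (C : pbc) : Prop :=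
  cpd H C \/ cpd (setU1pb H (pb_neg C)) pb_false.

Definition derives_set (H S : pbc -> Prop) : Prop :=
  forall C, S C -> derives H C.

Definition subst_lit (w : V -> lit) (l : lit) : lit :=
  if l.2 then w l.1 else ((w l.1).1, ~~ (w l.1).2).

Definition pb_subst (w : V -> lit) (C : pbc) : pbc :=
  PBC [seq (t.1, subst_lit w t.2) | t <- terms C] (deg C).

Definition set_subst (w : V -> lit) (S : pbc -> Prop) : pbc -> Prop :=
  fun D => exists2 C, S C & D = pb_subst w C.

Definition swap_subst (u v : V) : V -> lit :=
  fun x => if x == u then (v, true) else if x == v then (u, true) else (x, true).

(* O_lex(a, b) : sum_{i=1}^N 2^(N-i) (b_i - a_i) >= 0 *)
Definition olex (a b : seq lit) : pbc :=
  let N := size b in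
  PBC (flatten [seq let: (i, (ai, bi)) := q in
                    [:: ((2 ^+ (N - i.+1)%N : int), bi); (- (2 ^+ (N - i.+1)%N : int), ai)]
               | q <- zip (iota 0 N) (zip a b)]) 0.

(* objective f = sum_w \bar w, as a list of terms *)
Definition obj_terms : seq (int * lit) := [seq (1, (w, false)) | w <- enum V].

(* f <= k - 1 (k = None stands for infinity: trivially true constraint 0 >= 0) *)
Definition obj_le (k : option int) : pbc :=
  match k with
  | Some k => PBC [seq (- t.1, t.2) | t <- obj_terms] (- (k - 1))
  | None => PBC [::] 0
  end.

Definition obj_subst_le (w : V -> lit) : pbc :=
  PBC (obj_terms ++ [seq (- t.1, subst_lit w t.2) | t <- obj_terms]) 0.

Variable e : rel V.

Definition simple_graph : Prop := symmetric e /\ irreflexive e.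

Definition nbhd (a : V) : {set V} := [set w | e a w].

Definition dominates (a b : V) : Prop :=
  a != b /\ (nbhd b :\ a) \subset (nbhd a :\ b).

Definition FG : pbc -> Prop :=
  fun C => exists a b, [/\ a != b, ~~ e a b & C = PBC [:: (1, (a, false)); (1, (b, false))] 1].

End PB.

(* Main.v *)
Set Warnings "-notation-overridden,-ambiguous-paths,-notation-incompatible-prefix".
Require Import Defs.
From mathcomp Require Import all_boot all_order all_algebra.
Set Implicit Arguments. Unset Strict Implicit. Unset Printing Implicit Defensive.
Import Order.TTheory GRing.Theory Num.Theory.
Local Open Scope ring_scope.

Section Aux.
Variable V : finType.

Lemma nfE (n1 n2 : nf V) : (forall x, n1.1 x = n2.1 x) -> n1.2 = n2.2 -> n1 = n2.
Proof. by case: n1 n2 => [f1 d1] [f2 d2] /= Hf ->; congr pair; apply/ffunP. Qed.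

Definition pw (N i : nat) : int := 2 ^+ (N - i.+1)%N.

Lemma norm_olex (g h : V -> V) (z : seq V) (x0 : V) :
  norm (olex [seq (g y, true) | y <- z] [seq (h y, true) | y <- z]) =
  ([ffun x => \sum_(i <- iota 0 (size z))
      ((if h (nth x0 z i) == x then pw (size z) i else 0) +
       (if g (nth x0 z i) == x then - pw (size z) i else 0))], 0).
Proof.
rewrite /norm /olex /= size_map.
set N := size z.
have Hz : zip (iota 0 N) (zip [seq (g y, true) | y <- z] [seq (h y, true) | y <- z]) =
   [seq (i, ((g (nth x0 z i), true), (h (nth x0 z i), true))) | i <- iota 0 N].
  apply: (@eq_from_nth _ (0%N, ((x0,true),(x0,true)))).
    by rewrite size_map !size_zip !size_map size_iota !minnn.
  move=> i; rewrite !size_zip !size_map size_iota !minnn => Hi.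
  rewrite nth_zip ?size_zip ?size_map ?size_iota ?minnn //.
  rewrite nth_zip ?size_map //.
  by rewrite (nth_map 0%N) ?size_iota // nth_iota // (nth_map x0) // (nth_map x0).
rewrite Hz; apply: nfE => [x|] /=.
  rewrite ffunE ffunE big_flatten /= !big_map; apply: eq_bigr => i _.
  by rewrite !big_cons big_nil /term_coef /= addr0.
rewrite big_flatten /= !big_map big1 ?subr0 // => i _.
by rewrite big_cons big_cons big_nil.
Qed.

Lemma sum_pick (T : eqType) (s : seq T) (a : T) (F : T -> int) :
  uniq s -> a \in s -> \sum_(y <- s) (if y == a then F y else 0) = F a.
Proof.
move=> Us As; rewrite (bigD1_seq a) //= eqxx big1_seq ?addr0 // => y /andP[/negbTE -> _].
by [].
Qed.

Lemma sumidx (z : seq V) (x0 y : V) (F : nat -> int) :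
  uniq z -> y \in z ->
  \sum_(i <- iota 0 (size z)) (if nth x0 z i == y then F i else 0) = F (index y z).
Proof.
move=> Uz Yz.
rewrite (eq_big_seq (fun i => if i == index y z then F i else 0)).
  by rewrite sum_pick ?iota_uniq // mem_iota add0n index_mem.
move=> i; rewrite mem_iota add0n => /andP[_ Hi].
by rewrite -{1}(nth_index x0 Yz) nth_uniq ?index_mem.
Qed.

Lemma ifN0 (b : bool) (p : int) : (if b then - p else 0) = - (if b then p else 0).
Proof. by case: b; rewrite ?oppr0. Qed.

Lemma olex_coef (z : seq V) (x0 x : V) (g h gi hi : V -> V) :
  uniq z -> (forall y, y \in z) ->
  (forall a b, (g a == b) = (a == gi b)) -> (forall a b, (h a == b) = (a == hi b)) ->
  \sum_(i <- iota 0 (size z))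
      ((if h (nth x0 z i) == x then pw (size z) i else 0) +
       (if g (nth x0 z i) == x then - pw (size z) i else 0)) =
  pw (size z) (index (hi x) z) - pw (size z) (index (gi x) z).
Proof.
move=> Uz Az Hg Hh; rewrite big_split /=.
under eq_bigr => i _ do rewrite Hh.
under [X in _ + X]eq_bigr => i _ do rewrite Hg ifN0.
by rewrite sumrN !sumidx.
Qed.

Lemma norm_obj (w : V -> lit V) (sw : V -> V) :
  (forall y, w y = (sw y, true)) -> involutive sw ->
  norm (obj_subst_le w) = ([ffun => 0], 0).
Proof.
move=> wE swK; apply: nfE => [x|] /=.
  rewrite !ffunE big_cat /obj_terms !big_map /=.
  under eq_bigr => y _ do rewrite /term_coef /=.
  under [X in _ + X]eq_bigr => y _ do rewrite /term_coef /subst_lit /= wE /= opprK (inv_eq swK).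
  rewrite -enumT (@sum_pick _ _ x (fun _ => -1)) ?enum_uniq ?mem_enum //.
  by rewrite (@sum_pick _ _ (sw x) (fun _ => 1)) ?enum_uniq ?mem_enum // addNr.
rewrite big_cat /obj_terms !big_map /=.
have -> : \sum_(j <- Finite.enum V | ~~ ~~ (w j).2) (-1 : int) = \sum_(j <- Finite.enum V) -1
  by apply: eq_bigl => j; rewrite wE.
by rewrite sumrN addrN subr0.
Qed.

Lemma div_zero (d m : int) : nf_div d ([ffun=> 0], m) = ([ffun=> 0] : {ffun V -> int}, ceilz m d).
Proof.
apply: nfE => [x|] /=; first by rewrite !ffunE lexx /ceilz oppr0 div0z oppr0.
rewrite big_pred0 => [|x]; last by rewrite ffunE ltxx.
by rewrite big_pred0 => [|x]; rewrite ?ffunE ?ltxx // addr0 subr0.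
Qed.
End Aux.

Lemma ceilzz (c : int) : c != 0 -> ceilz c c = 1.
Proof. by move=> c0; rewrite /ceilz -(mulN1r c) mulzK ?opprK. Qed.

Lemma ceilzm1 : ceilz (-1) 2 = 0.
Proof. by []. Qed.

From mathcomp Require Import ring zify.

Theorem mainTheorem13 (V : finType) (e : rel V) (u v : V) (z : seq V)
  (D : pbc V -> Prop) (k : option int) :
  simple_graph e ->
  u != v ->
  dominates e u v ->
  uniq z -> (forall x, x \in z) -> (index v z < index u z)%N ->
  let w := swap_subst u v in
  let C := PBC [:: (1, (u, true)); (1, (v, false))] 1 in
  let zl := [seq (x, true) | x <- z] in
  let H := setU1pb (setU1pb (setUpb (FG e) D) (obj_le V k)) (pb_neg C) in
  derives_set H (setU1pb (setU1pb (set_subst w (FG e))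
                           (olex (map (subst_lit w) zl) zl)) (obj_subst_le w))
  /\ derives (setU1pb H (olex zl (map (subst_lit w) zl))) (pb_false V).
Proof.
move=> [esym eirr] Huv [_ Hdom] Uz Az Hidx w C zl H.
have hvu : (v == u) = false by rewrite eq_sym (negbTE Huv).
pose sw y := if y == u then v else if y == v then u else y.
have wE : forall y, w y = (sw y, true).
  by move=> y; rewrite /w /swap_subst /sw; case: ifP => //; case: ifP.
have swK : involutive sw.
  move=> y; rewrite /sw; have [->|yu] := eqVneq y u; first by rewrite eqxx hvu.
  have [->|yv] := eqVneq y v; first by rewrite ?hvu !eqxx ?hvu.
  by rewrite ?(negbTE yu) ?(negbTE yv).
have swu : sw u = v by rewrite /sw eqxx.
have swv : sw v = u by rewrite /sw hvu eqxx.
have swo : forall x, x != u -> x != v -> sw x = x.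
  by move=> x /negbTE xu /negbTE xv; rewrite /sw xu xv.
have mE : map (subst_lit w) zl = [seq (sw y, true) | y <- z].
  by rewrite /zl -map_comp; apply: eq_map => y; rewrite /= /subst_lit /= wE.
set N := size z.
set iu := index u z. set iv := index v z.
set c : int := pw N iv - pw N iu.
have c0 : 0 < c.
  rewrite subr_gt0 /pw (ltr_eXn2l (_ : 1 < 2)) //.
  have : (iu < N)%N by rewrite /iu /N index_mem.
  move: Hidx; rewrite -/iu -/iv. lia.
have cn0 : c != 0 by rewrite gt_eqF.
pose Hn := fun n => exists2 D, H D & norm D = n.
have hNC : cp Hn (norm (pb_neg C)) by apply: cp_ax; exists (pb_neg C) => //; right.
pose Fu := nf_add (norm (pb_neg C)) (norm (PBC [:: (1, (v,false))] 0)).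
have hFu : cp Hn Fu by apply: cp_add => //; apply: cp_lit.
pose Zd := nf_add (norm (PBC [:: (1, (u,true))] 0)) (norm (PBC [:: (1, (u,false))] 0)).
have hZd : cp Hn Zd by apply: cp_add; apply: cp_lit.
have ZdE : Zd = ([ffun=> 0], -1).
  apply: nfE => [x|] /=; rewrite ?ffunE /= !big_cons !big_nil /term_coef /=; last by [].
  by case: (u == x); rewrite ?addr0 ?subrr.
have derU : forall y, cp Hn (norm (PBC [:: (1, (u,false)); (1, (y,false))] 1))
                  /\ cp Hn (norm (PBC [:: (1, (y,false)); (1, (u,false))] 1)).
  move=> y; split.
    have -> : norm (PBC [:: (1, (u,false)); (1, (y,false))] 1) = nf_add Fu (norm (PBC [:: (1, (y,false))] 0)).
      apply: nfE => [x|] /=; rewrite ?ffunE /= !big_cons !big_nil /term_coef /=; last by ring.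
      case: (u == x); case: (v == x); case: (y == x); ring.
    by apply: cp_add => //; apply: cp_lit.
  have -> : norm (PBC [:: (1, (y,false)); (1, (u,false))] 1) = nf_add Fu (norm (PBC [:: (1, (y,false))] 0)).
    apply: nfE => [x|] /=; rewrite ?ffunE /= !big_cons !big_nil /term_coef /=; last by ring.
    case: (u == x); case: (v == x); case: (y == x); ring.
  by apply: cp_add => //; apply: cp_lit.
have domE : forall y, y != u -> e v y -> e u y.
  move=> y yu evy; have := subsetP Hdom y; rewrite /nbhd !inE evy yu /=.
  by move=> /(_ isT) /andP[_ ->].
have key : forall a b, a != b -> ~~ e a b -> e (sw a) (sw b) -> sw a = u \/ sw b = u.
  move=> a b ab nab.
  have [au|au] := eqVneq a u.
    subst a; rewrite swu.
    have [bv|bv] := eqVneq b v; first by subst b; rewrite swv; right.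
    have bu : b != u by rewrite eq_sym.
    rewrite swo // => evb; by rewrite (domE b bu evb) in nab.
  have [av|av] := eqVneq a v; first by subst a; rewrite swv; left.
  rewrite (swo a au av).
  have [bu|bu] := eqVneq b u.
    subst b; rewrite swu => eav.
    have eva : e v a by rewrite esym.
    by rewrite esym (domE a au eva) in nab.
  have [bv|bv] := eqVneq b v; first by subst b; rewrite swv; right.
  by rewrite (swo b bu bv) => eab; rewrite eab in nab.
have Hol1 : norm (olex (map (subst_lit w) zl) zl) =
    ([ffun x => pw N (index x z) - pw N (index (sw x) z)], 0).
  rewrite mE; change zl with [seq (id y, true) | y <- z].
  rewrite (norm_olex sw id z v); congr pair; apply/ffunP => x; rewrite !ffunE.
  exact: (@olex_coef V z v x sw id sw id Uz Az (inv_eq swK) (fun a b => erefl)).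
have Hol2 : norm (olex zl (map (subst_lit w) zl)) =
    ([ffun x => pw N (index (sw x) z) - pw N (index x z)], 0).
  rewrite mE; change zl with [seq (id y, true) | y <- z].
  rewrite (norm_olex id sw z v); congr pair; apply/ffunP => x; rewrite !ffunE.
  exact: (@olex_coef V z v x id sw id sw Uz Az (fun a b => erefl) (inv_eq swK)).
split.
  move=> T [[HT|HT]|HT]; left; rewrite /cpd.
  - case: HT => C' [a [b [ab nab ->]]] ->.
    rewrite /pb_subst /= /subst_lit /= !wE /=.
    case Eab: (e (sw a) (sw b)).
      case: (key a b ab nab Eab) => ->; by case: (derU (sw b)); case: (derU (sw a)).
    apply: cp_ax; eexists; last by reflexivity.
    left; left; left; exists (sw a), (sw b); split => //.
      by rewrite (inv_eq swK) swK.
    by rewrite Eab.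
  - rewrite HT Hol1.
    have -> : ([ffun x => pw N (index x z) - pw N (index (sw x) z)], 0) =
              nf_add (nf_mul c (norm (pb_neg C))) (nf_mul c Zd).
      rewrite ZdE; apply: nfE => [x|] /=; rewrite ?ffunE /= !big_cons !big_nil /term_coef /=; last by ring.
      have [->|xu] := eqVneq x u; first by rewrite /= swu hvu /c; ring.
      have [->|xv] := eqVneq x v; first by rewrite /= swv /c; ring.
      by rewrite /= swo // subrr; ring.
    by apply: cp_add; apply: cp_mul.
  - rewrite HT (norm_obj wE swK).
    have <- : nf_div 2 Zd = ([ffun=> 0], 0) by rewrite ZdE div_zero.
    by apply: cp_div.
left; rewrite /cpd.
set O := olex zl (map (subst_lit w) zl).
pose Hn' := fun n => exists2 D, setU1pb H O D & norm D = n.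
have hO : cp Hn' (norm O) by apply: cp_ax; exists O => //; right.
have hNC' : cp Hn' (norm (pb_neg C)) by apply: cp_ax; exists (pb_neg C) => //; left; right.
have -> : norm (pb_false V) = nf_div c (nf_add (norm O) (nf_mul c (norm (pb_neg C)))).
  have -> : nf_add (norm O) (nf_mul c (norm (pb_neg C))) = ([ffun=> 0], c).
    rewrite /O Hol2; apply: nfE => [x|] /=; rewrite ?ffunE /= !big_cons !big_nil /term_coef /=; last by ring.
    have [->|xu] := eqVneq x u; first by rewrite /= swu hvu /c; ring.
    have [->|xv] := eqVneq x v; first by rewrite /= swv /c; ring.
    by rewrite /= swo // subrr; ring.
  rewrite div_zero ceilzz //; apply: nfE => [x|] //=.
  by rewrite !ffunE big_nil.
  by rewrite big_nil subr0.
by apply: cp_div => //; apply: cp_add => //; apply: cp_mul.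
Qed.
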